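(* $\mathfrak{F}'\subseteq\mathcal{P}$, i.e. every connected graph with the extended distinguished edge property has property GNRP.
   Context: Graphs are finite, simple and undirected. $\mathbb{T}=\{z\in\mathbb{C}:|z|=1\}$, $\mathbb{I}=[0,2\pi)$. A $\mathbb{T}$-gain on $G$ is a map $\varphi$ from oriented edges to $\mathbb{T}$ with $\varphi(\overrightarrow{e_{ts}})=\varphi(\overrightarrow{e_{st}})^{-1}$; $A(\Phi)$ for $\Phi=(G,\varphi)$ is the Hermitian matrix with $(s,t)$ entry $\varphi(\overrightarrow{e_{st}})$ if $v_s\sim v_t$, else $0$; $\mathcal{T}_G$ is the set of all $\mathbb{T}$-gain graphs on $G$. $\Re(A)\ge0$ means the real part of every entry of $A$ is nonnegative. The gain of a directed cycle is the product of gains of its oriented edges. A rooted spanning tree $T$ with root $v_r$ induces the tree order ($v_x\le v_y$ iff $v_x$ is on the $T$-path from $v_r$ to $v_y$); $T$ is normal if adjacent vertices of $G$ are always comparable. The suitably oriented graph $\overrightarrow{G_T}$ orients each edge $e_{st}$ with $v_s\le v_t$ as $\overrightarrow{e_{st}}$ if $e_{st}\in E(T)$ and as $\overrightarrow{e_{ts}}$ otherwise; the $m-n+1$ fundamental cycles $C_j$ of $T$ become directed cycles $\overrightarrow{C_j(T)}$. For $r=(c_1,\dots,c_{m-n+1})\in\mathbb{I}^{m-n+1}$, $\mathcal{A}_T(r)=\{(G,\varphi)\in\mathcal{T}_G:\varphi(\overrightarrow{C_j(T)})=e^{ic_j}\ \forall j\}$. $G$ has GNRP (w.r.t. normal spanning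 tree $T$) if for each $r$ there is $\Phi\in\mathcal{A}_T(r)$ with $\Re(A(\Phi))\ge0$; $\mathcal{P}$ is the class of connected graphs with GNRP. The sum of subgraphs is the subgraph consisting of all edges in at least one of them. A fundamental subgraph of $G$ w.r.t. $T$ is the sum of a maximal collection of fundamental cycles whose sum intersects $T$ in a subtree. $K_4'$ denotes either $K_4$ or a subdivision of $K_4$ (a graph obtained from $K_4$ by repeatedly replacing an edge by a path of length two through a new vertex). A fundamental subgraph $\mathfrak{B}$ whose set $S$ of fundamental cycles contains three cycles $C_1',C_2',C_3'$ with $C_1'+C_2'+C_3'$ equal to a $K_4'$ is called $K_4'$-initiated; it equals $K_4'+C_1+\cdots+C_s$ where $C_1,\dots,C_s$ are the other cycles of $S$, and it has DEP if the $C_i$ can be ordered $C_{k_1},\dots,C_{k_s}$ so that $|E(C_{k_i})\setminus E(C_{k_0}+C_{k_1}+\cdots+C_{k_{i-1}})|>1$ for $i=1,\dots,s$, where $C_{k_0}=K_4'$. A non-$K_4'$-initiated fundamental subgraph built from cycles $C_1,\dots,C_s$ has DEP if they can be ordered $C_{k_1},\dots,C_{k_s}$ with $|E(C_{k_i})\setminus E(C_{k_1}+\cdots+C_{k_{i-1}})|>1$ for $i=2,\dots,s$. A connected graph has the extended distinguished edge property (EDEP) if all its $K_4'$-initiated and non-$K_4'$-initiated fundamental subgraphs with respect to a normal spanning tree $T$ have DEP (in the respective sense). $\mathfrak{F}'$ is the collection of connected graphs with EDEP. *)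

(* Defs.v *)
From mathcomp Require Import all_boot all_order all_algebra.
From mathcomp Require Import reals trigo.
From mathcomp Require Export complex.
Set Implicit Arguments. Unset Strict Implicit. Unset Printing Implicit Defensive.
Import Order.TTheory GRing.Theory Num.Theory.

(* An edge {u,v} is represented as the 2-element set [set u; v].       *)
Section Graphs.
Variables (T : finType) (e : rel T).

Definition simple_graph : Prop := symmetric e /\ irreflexive e.

Definition connected_graph : Prop := forall x y : T, connect e x y.

Definition rooted_spanning_tree (r : T) (par : T -> T) : Prop :=
  [/\ par r = r,
      (forall x, x != r -> e x (par x)) &
      (forall x, fconnect par x r)].

(* tree order: x <=_T y iff x lies on the T-path from the root to y,
   i.e. x is an ancestor of y (y itself included). *)
Definition tle (par : T -> T) (x y : T) : bool := fconnect par y x.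

Definition normal_tree (par : T -> T) : Prop :=
  forall x y, e x y -> tle par x y || tle par y x.

Definition tree_edge (r : T) (par : T -> T) (x y : T) : bool :=
  ((x != r) && (par x == y)) || ((y != r) && (par y == x)).

Definition tree_edges (r : T) (par : T -> T) : {set {set T}} :=
  [set [set x; par x] | x in [set x | x != r]].

(* Non-tree edges {s,t} with s <=_T t, written as the pair (s,t); each one
   determines the fundamental cycle C(s,t). *)
Definition back_edges (r : T) (par : T -> T) : {set T * T} :=
  [set p | [&& e p.1 p.2, tle par p.1 p.2 & ~~ tree_edge r par p.1 p.2]].

(* vertices u with s <_T u <=_T t : the tree path from s to t consists of
   the tree edges {par u, u} for these u *)
Definition tpath (par : T -> T) (s t : T) : {set T} :=
  [set u | [&& tle par s u, u != s & tle par u t]].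

Definition cyc_edges (par : T -> T) (p : T * T) : {set {set T}} :=
  [set [set u; par u] | u in tpath par p.1 p.2] :|: [set [set p.1; p.2]].

(* sum of the fundamental cycles indexed by S (union of edge sets) *)
Definition sum_edges (par : T -> T) (S : {set T * T}) : {set {set T}} :=
  \bigcup_(p in S) cyc_edges par p.

Definition vertices (F : {set {set T}}) : {set T} := \bigcup_(E in F) E.

Definition edge_rel (F : {set {set T}}) : rel T := fun a b => [set a; b] \in F.

Definition edge_connected (F : {set {set T}}) : Prop :=
  forall x y, x \in vertices F -> y \in vertices F -> connect (edge_rel F) x y.

Definition meets_in_subtree (r : T) (par : T -> T) (S : {set T * T}) : Prop :=
  edge_connected (sum_edges par S :&: tree_edges r par).

(* S is (the set of cycles of) a fundamental subgraph: a maximal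
   collection of fundamental cycles whose sum meets T in a subtree *)
Definition fundamental_set (r : T) (par : T -> T) (S : {set T * T}) : Prop :=
  [/\ S \subset back_edges r par,
      meets_in_subtree r par S &
      forall S' : {set T * T}, S \subset S' -> S' \subset back_edges r par ->
        meets_in_subtree r par S' -> S' = S].

Inductive subdivK4 : {set {set T}} -> Prop :=
| subdivK4_base (a b c d : T) : uniq [:: a; b; c; d] ->
    subdivK4 [set [set a; b]; [set a; c]; [set a; d];
                  [set b; c]; [set b; d]; [set c; d]]
| subdivK4_step (F : {set {set T}}) (x y w : T) :
    subdivK4 F -> [set x; y] \in F -> w \notin vertices F ->
    subdivK4 ((F :\ [set x; y]) :|: [set [set x; w]; [set w; y]]).

Fixpoint dep_from (par : T -> T) (B : {set {set T}}) (ks : seq (T * T)) : bool :=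
  if ks is k :: ks' then
    (1 < #|cyc_edges par k :\: B|) && dep_from par (B :|: cyc_edges par k) ks'
  else true.

Definition K4_initiated (par : T -> T) (S : {set T * T}) : Prop :=
  exists p1 p2 p3 : T * T,
    [/\ uniq [:: p1; p2; p3], [set p1; p2; p3] \subset S &
        subdivK4 (cyc_edges par p1 :|: cyc_edges par p2 :|: cyc_edges par p3)].

Definition DEP_K4 (par : T -> T) (S : {set T * T}) : Prop :=
  exists (p1 p2 p3 : T * T) (ks : seq (T * T)),
    let K := cyc_edges par p1 :|: cyc_edges par p2 :|: cyc_edges par p3 in
    [/\ uniq [:: p1; p2; p3], [set p1; p2; p3] \subset S, subdivK4 K,
        perm_eq ks (enum (S :\: [set p1; p2; p3])) & dep_from par K ks].

Definition DEP_nonK4 (par : T -> T) (S : {set T * T}) : Prop :=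
  exists ks : seq (T * T),
    perm_eq ks (enum S) /\
    (if ks is k :: ks' then dep_from par (cyc_edges par k) ks' else true).

Definition EDEP (r : T) (par : T -> T) : Prop :=
  forall S : {set T * T}, fundamental_set r par S ->
    (K4_initiated par S -> DEP_K4 par S) /\
    (~ K4_initiated par S -> DEP_nonK4 par S).

End Graphs.

Section Gains.
Local Open Scope ring_scope.
Local Open Scope complex_scope.
Variables (R : realType) (T : finType) (e : rel T).

(* phi x y = gain of the oriented edge from x to y *)
Definition gain_graph (phi : T -> T -> R[i]) : Prop :=
  forall x y, e x y -> `|phi x y| = 1 /\ phi y x = (phi x y)^-1.

Definition gain_adj (phi : T -> T -> R[i]) (x y : T) : R[i] :=
  if e x y then phi x y else 0.

(* gain of the directed fundamental cycle of the non-tree edge p = (s,t),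
   s <=_T t, in the suitably oriented graph: tree edges oriented
   par u -> u, the non-tree edge oriented t -> s *)
Definition cycle_gain (par : T -> T) (phi : T -> T -> R[i]) (p : T * T) : R[i] :=
  phi p.2 p.1 * \prod_(u in tpath par p.1 p.2) phi (par u) u.

Definition cexpi (c : R) : R[i] := cos c +i* sin c.

Definition in_AT (r : T) (par : T -> T) (c : T * T -> R) (phi : T -> T -> R[i]) : Prop :=
  gain_graph phi /\
  forall p, p \in back_edges e r par -> cycle_gain par phi p = cexpi (c p).

Definition GNRP (r : T) (par : T -> T) : Prop :=
  forall c : T * T -> R,
    (forall p, p \in back_edges e r par -> 0 <= c p < 2 * pi) ->
    exists phi : T -> T -> R[i],
      in_AT r par c phi /\ forall x y, 0 <= 'Re (gain_adj phi x y).

End Gains.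

(* Main.v *)
Require Import Defs.
From mathcomp Require Import all_boot all_order all_algebra.
From mathcomp Require Import reals trigo.
From mathcomp Require Import ring lra.
From Stdlib Require Import Classical.

Module PR1.
Set Implicit Arguments. Unset Strict Implicit. Unset Printing Implicit Defensive.
Import Order.TTheory GRing.Theory Num.Theory.
Local Open Scope ring_scope.
Local Open Scope complex_scope.

Section Real.
Variable R : realType.
Implicit Types (a b x y d lo be B S A C L : R).

Lemma cexpiD a b : cexpi (a + b) = cexpi a * cexpi b.
Proof. by rewrite /cexpi /= cosD sinD; apply/eqP; rewrite eq_complex /= !eqxx /= addrC eqxx. Qed.

Lemma cexpi0 : cexpi (0:R) = 1.
Proof. by rewrite /cexpi cos0 sin0. Qed.

Lemma cexpi2pi a : cexpi (a + pi *+ 2) = cexpi a.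
Proof. by rewrite /cexpi cosD2pi sinD2pi. Qed.

Lemma cexpi_nat a (n : nat) : cexpi (a + (pi *+ 2) *+ n) = cexpi a.
Proof.
elim: n => [|n IH]; first by rewrite mulr0n addr0.
by rewrite mulrSr addrA cexpi2pi IH.
Qed.

Lemma cexpi_int a (k : int) : cexpi (a - (pi *+ 2) *~ k) = cexpi a.
Proof.
case: k => n.
  rewrite -[in RHS](subrK ((pi *+ 2) *+ n) a).
  by rewrite cexpi_nat.
rewrite NegzE mulrNz opprK; exact: cexpi_nat a n.+1.
Qed.


Lemma reduce_angle L a : exists2 b, L <= b <= L + pi *+ 2 & cexpi b = cexpi a.
Proof.
have p2 : 0 < pi *+ 2 :> R by rewrite mulrn_wgt0 // pi_gt0.
set q := (a - L) / (pi *+ 2).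
have qE : q * (pi *+ 2) = a - L by rewrite /q divfK // gt_eqF.
set k := Num.floor q.
have h1 : k%:~R <= q := floor_le_tmp q.
have h2 : q < (k + 1)%:~R := lt_succ_floor q.
exists (a - (pi *+ 2) *~ k); last exact: cexpi_int.
rewrite -mulrzl.
have h1' : k%:~R * (pi *+ 2) <= q * (pi *+ 2) by rewrite ler_pM2r.
have h2' : q * (pi *+ 2) < (k + 1)%:~R * (pi *+ 2) by rewrite ltr_pM2r.
rewrite intrD mulrDl mul1r qE in h2'.
rewrite qE in h1'.
apply/andP; split; lra.
Qed.

Definition IH (x : R) := - (pi / 2) <= x <= pi / 2.

Lemma L2 a : exists x y, [/\ IH x, IH y & cexpi (x + y) = cexpi a].
Proof.
have [b hb eb] := reduce_angle (- pi) a.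
have pi0 := pi_gt0 R.
exists (b / 2), (b / 2); split; rewrite /IH; try (apply/andP; split; lra).
by rewrite -splitr.
Qed.


Lemma intv d : - pi <= d <= pi -> exists lo hi,
  [/\ - (pi/2) <= lo, hi <= pi/2, - (pi/2) <= d - hi, d - lo <= pi/2 &
      (0 <= d /\ pi - d <= hi - lo) \/ (d <= 0 /\ pi + d <= hi - lo)].
Proof.
move=> /andP[d1 d2]; have pi0 := pi_gt0 R.
case: (lerP 0 d) => hd.
  exists (d - pi/2), (pi/2); split; [lra|lra|lra|lra|left; split; lra].
exists (- (pi/2)), (d + pi/2); split; [lra|lra|lra|lra|right; split; lra].
Qed.

Lemma pickS lo be B : exists S p, [/\ lo <= S <= lo + pi, IH p &
   cexpi (S + be + p) = cexpi B].
Proof.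
have pi0 := pi_gt0 R.
have [v /andP[v1 v2] ev] := reduce_angle (lo + be - pi/2) B.
case: (lerP (v - be) (lo + pi/2)) => hv.
  exists lo, (v - be - lo); split; rewrite /IH; try (apply/andP; split; lra).
  by rewrite -ev; congr cexpi; lra.
exists (v - be - pi/2), (pi/2); split; rewrite /IH; try (apply/andP; split; lra).
by rewrite -ev; congr cexpi; lra.
Qed.

Lemma split_sum (lo1 hi1 lo2 hi2 : R) S : lo1 <= hi1 -> lo2 <= hi2 ->
  lo1 + lo2 <= S <= hi1 + hi2 ->
  exists al ga, [/\ lo1 <= al <= hi1, lo2 <= ga <= hi2 & al + ga = S].
Proof.
move=> h1 h2 /andP[s1 s2].
case: (lerP hi1 (S - lo2)) => hh.
  exists hi1, (S - hi1); split; try (apply/andP; split; lra); lra.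
exists (S - lo2), lo2; split; try (apply/andP; split; lra); lra.
Qed.

Lemma K4core (t1 t2 : R) be B : IH be ->
  t1 - be + (t2 - be) <= pi -> t1 - be - (t2 - be) <= pi ->
  - (t1 - be) + (t2 - be) <= pi -> - (t1 - be) - (t2 - be) <= pi ->
  exists al ga p1 p2 p3, [/\ [/\ IH al, IH ga, IH p1, IH p2 & IH p3],
     al + be + p1 = t1, be + ga + p2 = t2 &
     cexpi (al + be + ga + p3) = cexpi B].
Proof.
rewrite /IH => /andP[b1 b2] q1 q2 q3 q4; have pi0 := pi_gt0 R.
have [lo1 [hi1 [l1 u1 m1 n1 o1]]] : exists lo hi,
  [/\ - (pi/2) <= lo, hi <= pi/2, - (pi/2) <= (t1 - be) - hi, (t1 - be) - lo <= pi/2 &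
      (0 <= (t1 - be) /\ pi - (t1 - be) <= hi - lo) \/ ((t1 - be) <= 0 /\ pi + (t1 - be) <= hi - lo)].
  by apply: intv; apply/andP; split; lra.
have [lo2 [hi2 [l2 u2 m2 n2 o2]]] : exists lo hi,
  [/\ - (pi/2) <= lo, hi <= pi/2, - (pi/2) <= (t2 - be) - hi, (t2 - be) - lo <= pi/2 &
      (0 <= (t2 - be) /\ pi - (t2 - be) <= hi - lo) \/ ((t2 - be) <= 0 /\ pi + (t2 - be) <= hi - lo)].
  by apply: intv; apply/andP; split; lra.
have hsum : lo1 + lo2 + pi <= hi1 + hi2.
  by case: o1 => -[]; case: o2 => -[]; lra.
have hl1 : lo1 <= hi1 by case: o1 => -[]; lra.
have hl2 : lo2 <= hi2 by case: o2 => -[]; lra.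
have [S [p3 [/andP[S1 S2] hp3 eS]]] := pickS (lo1 + lo2) be B.
have [al [ga [/andP[a1 a2] /andP[g1 g2] ag]]] :
   exists al ga, [/\ lo1 <= al <= hi1, lo2 <= ga <= hi2 & al + ga = S].
  by apply: split_sum => //; apply/andP; split; lra.
exists al, ga, (t1 - be - al), (t2 - be - ga), p3; split.
- by split => //; apply/andP; split; lra.
- lra.
- lra.
- by rewrite -eS; congr cexpi; lra.
Qed.

Lemma K4real A B C : exists al be ga p1 p2 p3,
  [/\ [/\ IH al, IH be & IH ga], [/\ IH p1, IH p2 & IH p3],
     cexpi (al + be + p1) = cexpi A, cexpi (be + ga + p2) = cexpi C &
     cexpi (al + be + ga + p3) = cexpi B].
Proof.
have pi0 := pi_gt0 R.
have [th1 /andP[a1 a2] e1] := reduce_angle (- pi) A.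
have [th2 /andP[c1 c2] e2] := reduce_angle (- pi) C.
suff [t1 [t2 [be [hb f1 f2 [q1 q2 q3 q4]]]]] : exists t1 t2 be, [/\ IH be,
   cexpi t1 = cexpi A, cexpi t2 = cexpi C & [/\ t1 - be + (t2 - be) <= pi,
   t1 - be - (t2 - be) <= pi, - (t1 - be) + (t2 - be) <= pi &
   - (t1 - be) - (t2 - be) <= pi]].
  have [al [ga [p1 [p2 [p3 [[h1 h2 h3 h4 h5] g1 g2 g3]]]]]] := K4core B hb q1 q2 q3 q4.
  exists al, be, ga, p1, p2, p3; split => //.
  - by rewrite g1.
  - by rewrite -f2 -g2 addrC.
have e2pi x : cexpi (x - pi *+ 2) = cexpi x by rewrite -[in RHS](subrK (pi *+ 2) x) cexpi2pi.
rewrite /IH.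
case: (lerP (th1 - th2) pi) => d1; case: (lerP (th2 - th1) pi) => d2.
-
  case: (lerP ((th1 + th2) / 2) (- (pi / 2))) => m1.
    exists th1, th2, (- (pi/2)); split => //; try (apply/andP; split); try split; lra.
  case: (lerP (pi / 2) ((th1 + th2) / 2)) => m2.
    exists th1, th2, (pi/2); split => //; try (apply/andP; split); try split; lra.
  exists th1, th2, ((th1 + th2) / 2); split => //; try (apply/andP; split); try split; lra.
-
  case: (lerP (th1 + th2) 0) => s.
    exists (th1 + pi *+ 2), th2, (pi/2); split => //; rewrite ?cexpi2pi //;
      try (apply/andP; split); try split; lra.
  exists th1, (th2 - pi *+ 2), (- (pi/2)); split => //; rewrite ?e2pi //;
      try (apply/andP; split); try split; lra.
- case: (lerP (th1 + th2) 0) => s.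
    exists th1, (th2 + pi *+ 2), (pi/2); split => //; rewrite ?cexpi2pi //;
      try (apply/andP; split); try split; lra.
  exists (th1 - pi *+ 2), th2, (- (pi/2)); split => //; rewrite ?e2pi //;
      try (apply/andP; split); try split; lra.
- lra.
Qed.


Lemma ADJreal A B C : exists x1 x2 g qa qb qc,
  [/\ [/\ IH x1, IH x2 & IH g], [/\ IH qa, IH qb & IH qc],
     cexpi (x1 + x2 + qa) = cexpi A, cexpi (g + qc) = cexpi C &
     cexpi (x1 + x2 + g + qb) = cexpi B].
Proof.
have pi0 := pi_gt0 R.
have [g [qc [hg hqc egc]]] := L2 C.
have [qb [y [hqb hy eby]]] := L2 (B - A - g).
have [w /andP[w1 w2] ew] := reduce_angle (- pi) (A + y).
have hh : IH (w / 2) by rewrite /IH; apply/andP; split; lra.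
exists (w / 2), (w / 2), g, (- y), qb, qc; split => //.
- by split => //; move: hy; rewrite /IH => /andP[? ?]; apply/andP; split; lra.
- by rewrite -splitr cexpiD ew -cexpiD addrK.
- rewrite -splitr (_ : w + g + qb = w + (qb + g)); last by ring.
  rewrite cexpiD ew -cexpiD.
  rewrite (_ : A + y + (qb + g) = (qb + y) + (A + g)); last by ring.
  rewrite cexpiD eby -cexpiD; congr cexpi; ring.
Qed.

Local Open Scope complex_scope.

Lemma norm_cexpi (a : R) : `|cexpi a| = 1.
Proof.
rewrite normc_def /cexpi /= cos2Dsin2 sqrtr1 //.
Qed.

Lemma cexpiN (a : R) : cexpi (- a) = (cexpi a)^-1.
Proof.
have h : cexpi a * cexpi (- a) = 1 by rewrite -cexpiD subrr cexpi0.
have nz : cexpi a != 0.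
  by apply/eqP => h0; move: h; rewrite h0 mul0r => /eqP; rewrite eq_sym oner_eq0.
by rewrite -[cexpi (- a)]mul1r -(mulVf nz) -mulrA h mulr1.
Qed.

Lemma Re_cexpi_ge0 (a : R) : IH a -> 0 <= 'Re (cexpi a).
Proof.
by move=> h; rewrite -complexRe ler0c /cexpi /=; apply: cos_ge0_pihalf.
Qed.

Lemma IHN (a : R) : IH a -> IH (- a).
Proof. by rewrite /IH => /andP[h1 h2]; rewrite lerN2 h2 /= lerNl. Qed.


End Real.

End PR1.
Import PR1.

Module PG1.
Set Implicit Arguments. Unset Strict Implicit. Unset Printing Implicit Defensive.
Import Order.TTheory GRing.Theory Num.Theory.

Section Tree.
Variables (T : finType) (r : T) (par : T -> T).
Hypotheses (Hr : par r = r) (Hroot : forall x, fconnect par x r).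

Local Notation tle := (tle par).

Lemma tleP x y : reflect (exists n, iter n par y = x) (tle x y).
Proof.
apply: (iffP idP) => [h|[n <-]]; last exact: fconnect_iter.
by exists (findex par y x); apply: iter_findex.
Qed.

Lemma fix_root x : par x = x -> x = r.
Proof.
move=> hx; have /tleP[n hn] := Hroot x.
by rewrite iter_fix in hn.
Qed.

Lemma tle_refl x : tle x x.
Proof. by apply/tleP; exists 0%N. Qed.

Lemma tle_par x : tle (par x) x.
Proof. by apply/tleP; exists 1%N. Qed.

Lemma tle_trans x y z : tle x y -> tle y z -> tle x z.
Proof.
move=> /tleP[n hn] /tleP[m hm]; apply/tleP; exists (n + m)%N.
by rewrite iterD hm.
Qed.

Lemma tle_root x : tle r x.
Proof. exact: Hroot. Qed.

Lemma tle_to_root x : tle x r -> x = r.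
Proof. by move=> /tleP[n]; rewrite iter_fix. Qed.

Lemma iter_root_after x n m : iter n par x = r -> (n <= m)%N -> iter m par x = r.
Proof.
move=> hn /subnK <-; by rewrite iterD hn iter_fix.
Qed.

Lemma tle_anti x y : tle x y -> tle y x -> x = y.
Proof.
move=> /tleP[i hi] /tleP[j hj].
have hx : iter (i + j) par x = x by rewrite iterD hj.
case: (posnP (i + j)) => h0.
  have i0 : i = 0%N by move: h0; case: (i).
  by rewrite -hi i0.
have /tleP[N hN] := Hroot x.
have hper : forall k, iter ((i + j) * k) par x = x.
  elim=> [|k IH]; first by rewrite muln0.
  by rewrite mulnS iterD IH hx.
have : iter ((i + j) * N) par x = r.
  apply: (iter_root_after hN); rewrite leq_pmull //.
rewrite hper => xr.
move: hi hj; rewrite xr => hi hj.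
by rewrite -hj iter_fix.
Qed.

Lemma tle_total a b t : tle a t -> tle b t -> tle a b || tle b a.
Proof.
move=> /tleP[i hi] /tleP[j hj].
case: (leqP i j) => hij.
  apply/orP; right; apply/tleP; exists (j - i)%N.
  by rewrite -hi -iterD subnK.
apply/orP; left; apply/tleP; exists (i - j)%N.
by rewrite -hj -iterD subnK // ltnW.
Qed.

Lemma tle_parent a u : tle a u -> u != a -> tle a (par u).
Proof.
move=> /tleP[[|n] hn] hne; first by rewrite -hn eqxx in hne.
by apply/tleP; exists n; rewrite -iterSr.
Qed.

Lemma tle_up u w : tle u (par w) -> tle u w.
Proof. by move=> h; apply: tle_trans h (tle_par w). Qed.

Lemma tle_nr a u : tle a u -> u != a -> u != r.
Proof.
move=> h hne; apply/eqP => ur; rewrite ur in h hne.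
by rewrite (tle_to_root h) eqxx in hne.
Qed.

Lemma no_2cycle x y : x != r -> par x = y -> par y = x -> False.
Proof.
move=> xr hxy hyx.
have h1 : tle y x by rewrite -hxy tle_par.
have h2 : tle x y by rewrite -hyx tle_par.
have exy := tle_anti h2 h1.
move: hxy; rewrite -exy => /fix_root; by move/eqP: xr.
Qed.

End Tree.

End PG1.
Import PG1.

Module PA.
Set Implicit Arguments. Unset Strict Implicit. Unset Printing Implicit Defensive.
Import Order.TTheory GRing.Theory Num.Theory.
Local Open Scope ring_scope.

Section Assign.
Variables (R : realType) (T : finType).
Implicit Types (ang : {set T} -> R) (l : seq ({set T} * R)).

Definition good ang := forall F, IH (ang F).

Definition bumpa ang l F :=
  ang F + \sum_(ev <- l) (if F == ev.1 then ev.2 - ang ev.1 else 0).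

Lemma sum_ind1 (Z : {set {set T}}) E (d : R) :
  \sum_(F in Z) (if F == E then d else 0) = if E \in Z then d else 0.
Proof.
case: ifP => EZ.
  rewrite (bigD1 E) //= eqxx big1 ?addr0 // => F /andP[_ /negbTE ->] //.
by apply: big1 => F FZ; case: eqP => // h; rewrite -h FZ in EZ.
Qed.

Lemma bumpa_sum ang l (Z : {set {set T}}) :
  \sum_(F in Z) bumpa ang l F = \sum_(F in Z) ang F +
     \sum_(ev <- l) (if ev.1 \in Z then ev.2 - ang ev.1 else 0).
Proof.
rewrite /bumpa big_split /=; congr (_ + _).
rewrite exchange_big /=; apply: eq_bigr => ev _.
exact: sum_ind1.
Qed.

Lemma bumpa_out ang l F : F \notin map fst l -> bumpa ang l F = ang F.
Proof.
move=> h; rewrite /bumpa big1_seq ?addr0 // => ev /andP[_ evl].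
case: eqP => // FE; exfalso; move/negP: h; apply.
by rewrite FE; apply: map_f.
Qed.

Lemma bumpa_in ang l E v : uniq (map fst l) -> (E, v) \in l -> bumpa ang l E = v.
Proof.
move=> u i; rewrite /bumpa.
suff -> : \sum_(ev <- l) (if E == ev.1 then ev.2 - ang ev.1 else 0) = v - ang E.
  by rewrite addrC subrK.
elim: l u i => [|[E' v'] l IH] //= /andP[nE u]; rewrite in_cons big_cons /=.
case/orP => [/eqP [-> ->]|i].
  rewrite eqxx big1_seq ?addr0 // => ev /andP[_ evl].
  case: eqP => // h; exfalso; move/negP: nE; apply; rewrite h.
  by apply: map_f.
rewrite IH //; case: eqP => [h|_]; last by rewrite add0r.
exfalso; move/negP: nE; apply; rewrite -h.
by apply/mapP; exists (E, v).
Qed.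

Lemma good_bumpa ang l : good ang -> (forall ev, ev \in l -> IH ev.2) ->
  uniq (map fst l) -> good (bumpa ang l).
Proof.
move=> g hl u F.
case: (boolP (F \in map fst l)) => [/mapP[[E v] i /= ->]|h]; last by rewrite bumpa_out.
by rewrite (bumpa_in _ u i); apply: (hl _ i).
Qed.

Lemma two_free ang (Z B : {set {set T}}) th : (1 < #|Z :\: B|)%N -> good ang ->
  exists ang', [/\ good ang', (forall F, (F \in B) || (F \notin Z) -> ang' F = ang F) &
    cexpi (\sum_(F in Z) ang' F) = cexpi th].
Proof.
move=> /card_gt1P[e1 [e2 [h1 h2 ne]]] g.
move: h1 h2; rewrite !in_setD => /andP[n1 z1] /andP[n2 z2].
have [x [y [hx hy exy]]] := L2 (th - (\sum_(F in Z) ang F - ang e1 - ang e2)).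
have u : uniq (map fst [:: (e1, x); (e2, y)]) by rewrite /= inE ne.
exists (bumpa ang [:: (e1, x); (e2, y)]); split.
- apply: good_bumpa => // ev; rewrite !inE => /orP[/eqP->|/eqP->] //.
- move=> F hF; apply: bumpa_out; rewrite /= !inE.
  apply/negP => /orP[/eqP h|/eqP h]; move: hF; rewrite h.
  + by rewrite (negbTE n1) z1.
  + by rewrite (negbTE n2) z2.
- rewrite bumpa_sum !big_cons big_nil /= z1 z2.
  have -> : \sum_(F in Z) ang F + (x - ang e1 + (y - ang e2 + 0)) =
     (\sum_(F in Z) ang F - ang e1 - ang e2) + (x + y) by ring.
  by rewrite cexpiD exy -cexpiD; congr cexpi; ring.
Qed.

End Assign.

End PA.
Import PA.

Module PM.
Set Implicit Arguments. Unset Strict Implicit. Unset Printing Implicit Defensive.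
Import Order.TTheory GRing.Theory Num.Theory.
Lemma set2_eq (T : finType) (a b c d : T) : [set a; b] = [set c; d] ->
  (a = c /\ b = d) \/ (a = d /\ b = c).
Proof.
move=> h.
have ha : a \in [set c; d] by rewrite -h !inE eqxx.
have hb : b \in [set c; d] by rewrite -h !inE eqxx orbT.
have hc : c \in [set a; b] by rewrite h !inE eqxx.
have hd : d \in [set a; b] by rewrite h !inE eqxx orbT.
move: ha hb hc hd; rewrite !inE => /orP[] /eqP ha /orP[] /eqP hb /orP[] /eqP hc /orP[] /eqP hd;
  subst; intuition congruence.
Qed.

Local Open Scope ring_scope.

Section GA.
Variables (R : realType) (T : finType) (e : rel T) (r : T) (par : T -> T).
Hypotheses (Hsym : symmetric e) (Hirr : irreflexive e) (Hr : par r = r)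
  (Hpe : forall x, x != r -> e x (par x)) (Hroot : forall x, fconnect par x r).
Variable c : T * T -> R.
Implicit Types (ang : {set T} -> R).

Local Notation back := (back_edges e r par).
Local Notation cyc := (cyc_edges par).
Local Notation tp p := (tpath par p.1 p.2).
Local Notation tle := (tle par).

Local Open Scope nat_scope.


Lemma back_props p : p \in back ->
  [/\ e p.1 p.2, tle p.1 p.2, ~~ tree_edge r par p.1 p.2 & p.1 != p.2].
Proof.
rewrite inE => /and3P[h1 h2 h3]; split => //.
by apply/eqP => h; rewrite h Hirr in h1.
Qed.

Lemma tpE p u : (u \in tp p) = [&& tle p.1 u, u != p.1 & tle u p.2].
Proof. by rewrite inE. Qed.

Lemma tp_nr p u : u \in tp p -> u != r.
Proof. by rewrite tpE => /and3P[h1 h2 _]; apply: (tle_nr Hr h1). Qed.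

Lemma t_in_tp p : p \in back -> p.2 \in tp p.
Proof.
case/back_props => _ h1 _ h3; rewrite tpE h1 tle_refl andbT.
by rewrite eq_sym.
Qed.

Lemma tedge_inj u v : u != r -> v != r -> [set u; par u] = [set v; par v] -> u = v.
Proof.
move=> ur vr /set2_eq [[]//|[h1 h2]].
exfalso; apply: (no_2cycle Hr Hroot ur); [exact: h2|exact: esym h1].
Qed.

Lemma tedge_tree u : u != r -> tree_edge r par u (par u).
Proof. by move=> ur; rewrite /tree_edge ur eqxx. Qed.

Lemma tree_edge_sym x y : tree_edge r par x y = tree_edge r par y x.
Proof. by rewrite /tree_edge orbC. Qed.

Lemma back_not_tedge p u : p \in back -> u != r -> [set p.1; p.2] != [set u; par u].
Proof.
move=> /back_props[_ _ nt _] ur; apply/eqP => /set2_eq [[h1 h2]|[h1 h2]].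
  by move: nt; rewrite h1 h2 tedge_tree.
by move: nt; rewrite h1 h2 tree_edge_sym tedge_tree.
Qed.

Lemma cycE p : cyc p = [set [set u; par u] | u in tp p] :|: [set [set p.1; p.2]].
Proof. by []. Qed.

Lemma cyc_tedge p u : p \in back -> u != r ->
  ([set u; par u] \in cyc p) = (u \in tp p).
Proof.
move=> pb ur; rewrite cycE in_setU in_set1.
have -> : ([set u; par u] == [set p.1; p.2]) = false.
  by apply/negbTE; rewrite eq_sym back_not_tedge.
rewrite orbF; apply/imsetP/idP => [[v vin /tedge_inj]|uin]; last by exists u.
by move=> h; rewrite h // (tp_nr vin).
Qed.

Lemma back_eq p q : p \in back -> q \in back -> [set q.1; q.2] = [set p.1; p.2] -> q = p.
Proof.
move=> /back_props[_ hp _ np] /back_props[_ hq _ nq] /set2_eq [[h1 h2]|[h1 h2]].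
  by case: p q h1 h2 {hp hq np nq} => [? ?] [? ?] /= -> ->.
rewrite h1 h2 in hq; by rewrite (tle_anti Hr Hroot hp hq) eqxx in np.
Qed.

Lemma cyc_bedge p q : p \in back -> q \in back ->
  ([set q.1; q.2] \in cyc p) = (q == p).
Proof.
move=> pb qb; rewrite cycE in_setU in_set1.
case: (q =P p) => [->|nqp]; first by rewrite eqxx orbT.
apply/negbTE; rewrite negb_or; apply/andP; split.
  apply/imsetP => -[u uin hu].
  by move: (back_not_tedge qb (tp_nr uin)); rewrite hu eqxx.
by apply/eqP => /(back_eq pb qb).
Qed.

Lemma cyc_cases p F : F \in cyc p ->
  (exists2 u, u \in tp p & F = [set u; par u]) \/ F = [set p.1; p.2].
Proof.
rewrite cycE in_setU in_set1 => /orP[/imsetP[u uin ->]|/eqP ->]; last by right.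
by left; exists u.
Qed.

Lemma card_cyc p : p \in back -> (1 < #|cyc p|)%N.
Proof.
move=> pb; apply/card_gt1P; exists [set p.2; par p.2], [set p.1; p.2].
rewrite cyc_tedge ?(tp_nr (t_in_tp pb)) ?t_in_tp //.
rewrite -[_ \in cyc p]/(_ \in cyc p).
split => //.
- by rewrite cycE in_setU in_set1 eqxx orbT.
- by rewrite eq_sym back_not_tedge ?(tp_nr (t_in_tp pb)).
Qed.

Lemma tp_eq p q : p \in back -> q \in back -> tp p \subset tp q -> tp q \subset tp p -> p = q.
Proof.
move=> pb qb /subsetP s1 /subsetP s2.
have e2 : p.2 = q.2.
  have := s1 _ (t_in_tp pb); rewrite tpE => /and3P[_ _ h1].
  have := s2 _ (t_in_tp qb); rewrite tpE => /and3P[_ _ h2].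
  by have := tle_anti Hr Hroot h1 h2.
have [_ hp _ np] := back_props pb.
have [_ hq _ nq] := back_props qb.
have e1 : p.1 = q.1.
  rewrite -e2 in hq.
  case/orP: (tle_total hp hq) => h.
    case: (p.1 =P q.1) => // ne.
    have : q.1 \in tp p by rewrite tpE h hq eq_sym andbT; apply/eqP.
    by move/s1; rewrite tpE eqxx andbF.
  case: (p.1 =P q.1) => // ne.
  have : p.1 \in tp q by rewrite tpE h -e2 hp andbT; apply/eqP.
  by move/s2; rewrite tpE eqxx andbF.
by case: p q e1 e2 {pb qb s1 s2 hp np hq nq} => [? ?] [? ?] /= -> ->.
Qed.

Local Open Scope ring_scope.
Definition csum ang p := \sum_(F in cyc p) ang F.
Definition sat ang p := cexpi (csum ang p) = cexpi (c p).

Lemma sat_stable ang ang' p : (forall F, F \in cyc p -> ang' F = ang F) ->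
  sat ang p -> sat ang' p.
Proof. by move=> h; rewrite /sat /csum (eq_bigr _ h). Qed.

Lemma step ang (B : {set {set T}}) p : (1 < #|cyc p :\: B|)%N -> good ang ->
  exists ang', [/\ good ang', (forall F, (F \in B) || (F \notin cyc p) -> ang' F = ang F) &
    sat ang' p].
Proof. exact: two_free. Qed.

Definition realizes ang (P : seq (T * T)) ang' :=
  [/\ good ang', (forall F, ~~ has (fun p => F \in cyc p) P -> ang' F = ang F) &
      forall p, p \in P -> sat ang' p].

Lemma realizes_perm ang P P' ang' : P =i P' -> realizes ang P ang' -> realizes ang P' ang'.
Proof.
move=> hP [g h1 h2]; split => //.
  by move=> F; rewrite -(eq_has_r hP); apply: h1.
by move=> p; rewrite -hP; apply: h2.
Qed.

Lemma seq_real ks : forall (B : {set {set T}}) ang, dep_from par B ks -> good ang ->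
  exists ang', [/\ good ang',
     (forall F, (F \in B) || ~~ has (fun k => F \in cyc k) ks -> ang' F = ang F) &
     forall k, k \in ks -> sat ang' k].
Proof.
elim: ks => [|k ks IH] B ang /=.
  by move=> _ g; exists ang; split.
move=> /andP[h1 h2] g.
have [ang1 [g1 c1 s1]] := step h1 g.
have [ang2 [g2 c2 s2]] := IH _ _ h2 g1.
exists ang2; split => //.
- move=> F /orP[FB|].
    by rewrite c2 ?in_setU ?FB // c1 ?FB.
  rewrite negb_or => /andP[n1 n2].
  by rewrite c2 ?n2 ?orbT // c1 // n1 orbT.
- move=> k'; rewrite in_cons => /orP[/eqP->|]; last exact: s2.
  apply: sat_stable s1 => F Fk.
  by rewrite c2 // in_setU Fk orbT.
Qed.

Lemma sat_bump ang l p :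
  cexpi (\sum_(ev <- l | ev.1 \in cyc p) ev.2) =
  cexpi (c p - csum ang p + \sum_(ev <- l | ev.1 \in cyc p) ang ev.1) ->
  sat (bumpa ang l) p.
Proof.
move=> h; rewrite /sat /csum bumpa_sum -big_mkcond /= sumrB.
rewrite (_ : \sum_(F in cyc p) ang F + (\sum_(i <- l | i.1 \in cyc p) i.2 -
   \sum_(i <- l | i.1 \in cyc p) ang i.1) = (\sum_(F in cyc p) ang F -
   \sum_(i <- l | i.1 \in cyc p) ang i.1) + \sum_(i <- l | i.1 \in cyc p) i.2); last by ring.
rewrite cexpiD h -cexpiD; congr cexpi; rewrite /csum; ring.
Qed.

Lemma edges_uniq (us : seq T) (qs : seq (T * T)) :
  uniq us -> all (fun u => u != r) us -> uniq qs -> all (fun q => q \in back) qs ->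
  uniq ([seq [set u; par u] | u <- us] ++ [seq [set q.1; q.2] | q <- qs]).
Proof.
move=> uu /allP au uq /allP aq; rewrite cat_uniq; apply/and3P; split.
- rewrite map_inj_in_uniq // => x y xi yi; apply: tedge_inj => //; [exact: au|exact: au].
- apply/hasP => -[F /mapP[q qi ->] /mapP[u ui]].
  by move/eqP; rewrite (negbTE (back_not_tedge (aq _ qi) (au _ ui))).
- rewrite map_inj_in_uniq // => x y xi yi h; apply: (back_eq (aq _ yi) (aq _ xi)).
  by rewrite h.
Qed.

Lemma incl q (U : {set {set T}}) u : q \in back -> [set q.1; q.2] \notin U ->
  (#|cyc q :\: U| <= 1)%N -> u \in tp q -> [set u; par u] \in U.
Proof.
move=> qb nU hc ui; apply/negPn/negP => nu.
move: hc; rewrite leqNgt => /negP; apply; apply/card_gt1P.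
exists [set u; par u], [set q.1; q.2]; split.
- by rewrite in_setD nu (cyc_tedge qb (tp_nr ui)) ui.
- by rewrite in_setD nU cycE in_setU in_set1 eqxx orbT.
- by rewrite eq_sym (back_not_tedge qb (tp_nr ui)).
Qed.

Lemma sub_tp2 q p1 p2 u : q \in back -> p1 \in back -> p2 \in back ->
  q != p1 -> q != p2 -> (#|cyc q :\: (cyc p1 :|: cyc p2)| <= 1)%N ->
  u \in tp q -> (u \in tp p1) || (u \in tp p2).
Proof.
move=> qb b1 b2 n1 n2 hc ui.
have : [set u; par u] \in cyc p1 :|: cyc p2.
  apply: (incl qb _ hc ui).
  rewrite in_setU !cyc_bedge //; apply/norP; split; [exact: n1|exact: n2].
by rewrite in_setU !cyc_tedge // (tp_nr ui).
Qed.

Lemma pair_ord ang p q : p \in back -> q \in back -> (1 < #|cyc q :\: cyc p|)%N ->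
  good ang -> exists ang', realizes ang [:: p; q] ang'.
Proof.
move=> pb qb hq g.
have hp : (1 < #|cyc p :\: set0|)%N by rewrite setD0 card_cyc.
have [ang1 [g1 c1 s1]] := step hp g.
have [ang2 [g2 c2 s2]] := step hq g1.
exists ang2; split => //.
- move=> F; rewrite /= negb_or orbF => /andP[n1 n2].
  by rewrite c2 ?n2 ?orbT // c1 // n1 orbT.
- move=> k; rewrite !inE => /orP[/eqP->|/eqP->] //.
  by apply: sat_stable s1 => F Fp; rewrite c2 // Fp.
Qed.

Lemma pair_real ang p q : p \in back -> q \in back -> p != q ->
  good ang -> exists ang', realizes ang [:: p; q] ang'.
Proof.
move=> pb qb npq g.
case: (boolP (1 < #|cyc q :\: cyc p|)%N) => h1; first exact: pair_ord.
case: (boolP (1 < #|cyc p :\: cyc q|)%N) => h2.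
  have [ang' h] := pair_ord qb pb h2 g; exists ang'.
  by apply: realizes_perm h => x; rewrite !inE orbC.
suff epq : p = q by rewrite epq eqxx in npq.
rewrite -leqNgt in h1; rewrite -leqNgt in h2.
apply: tp_eq => //; apply/subsetP => u ui.
- have : [set u; par u] \in cyc q.
    apply: (incl pb _ h2 ui).
    by rewrite cyc_bedge // npq.
  by rewrite cyc_tedge // (tp_nr ui).
- have : [set u; par u] \in cyc p.
    apply: (incl qb _ h1 ui).
    by rewrite cyc_bedge // eq_sym npq.
  by rewrite cyc_tedge // (tp_nr ui).
Qed.

Lemma triple_easy ang a b c3 : a \in back -> b \in back -> c3 \in back -> a != b ->
  (1 < #|cyc c3 :\: (cyc a :|: cyc b)|)%N -> good ang ->
  exists ang', realizes ang [:: a; b; c3] ang'.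
Proof.
move=> ab bb cb nab hc g.
have [ang1 [g1 c1 s1]] := pair_real ab bb nab g.
have [ang2 [g2 c2 s2]] := step hc g1.
exists ang2; split => //.
- move=> F; rewrite /= !negb_or => /and4P[n1 n2 n3 _].
  rewrite c2; last by rewrite n3 orbT.
  by apply: c1; rewrite /= !negb_or n1 n2.
- move=> k; rewrite !inE => /or3P[/eqP->|/eqP->|/eqP->] //.
  + by apply: (sat_stable (ang:=ang1)); [move=> F Fp; rewrite c2 // in_setU Fp | apply: s1; rewrite inE eqxx].
  + by apply: (sat_stable (ang:=ang1)); [move=> F Fp; rewrite c2 // in_setU Fp orbT | apply: s1; rewrite !inE eqxx orbT].
Qed.

Lemma pair_ext (p q : T * T) : p.1 = q.1 -> p.2 = q.2 -> p = q.
Proof. by case: p q => [? ?] [? ?] /= -> ->. Qed.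

Definition allIH (l : seq ({set T} * R)) := foldr (fun ev P => IH ev.2 /\ P) True l.

Lemma allIHP l : allIH l -> forall ev, ev \in l -> IH ev.2.
Proof.
elim: l => [|ev0 l IHl] //= [h0 hl] ev; rewrite in_cons => /orP[/eqP->//|].
exact: IHl.
Qed.

Lemma realize_bump ang (l : seq ({set T} * R)) (P : seq (T * T)) :
  all (fun ev => has (fun p => ev.1 \in cyc p) P) l -> allIH l -> uniq (map fst l) ->
  good ang -> (forall p, p \in P -> sat (bumpa ang l) p) -> realizes ang P (bumpa ang l).
Proof.
move=> /allP hall hIH u g hs; split => //.
  by apply: good_bumpa => //; apply: allIHP.
move=> F nF; apply: bumpa_out; apply/mapP => -[ev evl FE].
by move/negP: nF; apply; rewrite FE; apply: hall.
Qed.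

Lemma child_exists p : p \in back -> exists2 u, u \in tp p & par u = p.1.
Proof.
move=> pb; have [_ lp _ np] := back_props pb.
have hex : exists n, iter n par p.2 == p.1.
  by have /(tleP _) [n hn] := lp; exists n; rewrite hn.
case: (ex_minnP hex) => -[|n] /eqP hn hmin.
  by rewrite /= in hn; rewrite hn eqxx in np.
exists (iter n par p.2) => //.
have h3 : tle (iter n par p.2) p.2 by apply: fconnect_iter.
rewrite tpE h3 andbT; apply/andP; split.
  by rewrite -hn /= tle_par.
apply/negP => /eqP h; have := hmin n; rewrite h eqxx => /(_ isT).
by rewrite ltnn.
Qed.

Lemma tle_child (p q : T * T) (u : T) : u \in tp q -> par u = p.1 -> tle q.1 p.1.
Proof.
rewrite tpE => /and3P[h1 h2 _] <-; exact: tle_parent h1 h2.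
Qed.

Lemma canon ang a b c3 : a \in back -> b \in back -> c3 \in back ->
  a != b -> b != c3 -> a != c3 -> a.1 = b.1 -> b.2 = c3.2 ->
  (forall u, u \in tp a -> (u \in tp b) || (u \in tp c3)) ->
  (forall u, u \in tp b -> (u \in tp a) || (u \in tp c3)) ->
  (forall u, u \in tp c3 -> (u \in tp a) || (u \in tp b)) ->
  good ang -> exists ang', realizes ang [:: a; b; c3] ang'.
Proof.
move=> ab bb cb nab nbc nac hm hM Ia Ib Ic g.
have [_ la nta na] := back_props ab.
have [_ lb ntb nb] := back_props bb.
have [_ lc ntc nc] := back_props cb.
have f1 : tle a.2 b.2.
  case/orP: (Ia _ (t_in_tp ab)); rewrite tpE => /and3P[_ _ //].
  by rewrite hM.
have f2 : tle b.1 c3.1.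
  have [u uc pu] := child_exists cb.
  case/orP: (Ic _ uc) => ui.
    by rewrite -hm; apply: (tle_child ui pu).
  exact: (tle_child ui pu).
have f3 : c3.1 != b.1.
  apply/eqP => h; move/eqP: nbc; apply; apply: pair_ext => //.
have f4 : a.2 != b.2.
  apply/eqP => h; move/eqP: nab; apply; apply: pair_ext => //.
have f5 : c3.1 \in tp b by rewrite tpE f2 f3 hM lc.
have Xa : c3.1 \in tp a.
  case/orP: (Ib _ f5) => //; rewrite tpE => /and3P[_ h _].
  by rewrite eqxx in h.
have f6 : tle c3.1 a.2 by move: Xa; rewrite tpE => /and3P[].
have Ya : a.2 \in tp a := t_in_tp ab.
have Yb : a.2 \in tp b by rewrite tpE -hm la (eq_sym a.2) na f1.
have Zb : b.2 \in tp b := t_in_tp bb.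
have Zc : b.2 \in tp c3 by rewrite hM t_in_tp.
have Za : (b.2 \in tp a) = false.
  apply/negbTE; rewrite tpE; apply/negP => /and3P[_ _ h].
  by rewrite (tle_anti Hr Hroot f1 h) eqxx in f4.
have Yr := tp_nr Ya.
have Zr := tp_nr Zb.
have m1 : forall p, p \in back -> forall u, u \in tp p -> ([set u; par u] \in cyc p) = true.
  by move=> p pb u ui; rewrite cyc_tedge // (tp_nr ui).
have m0 : forall p, p \in back -> forall u, u != r -> u \notin tp p -> ([set u; par u] \in cyc p) = false.
  by move=> p pb u ur ui; rewrite cyc_tedge // (negbTE ui).
have bab : (b == a) = false by apply/negbTE; rewrite eq_sym.
have bcb : (c3 == b) = false by apply/negbTE; rewrite eq_sym.
have bca : (c3 == a) = false by apply/negbTE; rewrite eq_sym.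
have bac : (a == c3) = false by apply/negbTE.
have bba : (a == b) = false by apply/negbTE.
have bbc : (b == c3) = false by apply/negbTE.
case: (boolP (c3.1 == a.2)) => hYX.
-
  have Yc : (a.2 \in tp c3) = false by rewrite tpE -(eqP hYX) eqxx /= andbF.
  have nPY : par a.2 != a.1.
    apply/eqP => h; move: nta; rewrite /tree_edge h eqxx Yr /=.
    by rewrite orbT.
  have lPY : tle a.1 (par a.2).
    by apply: (tle_parent la); rewrite eq_sym.
  have PYa : par a.2 \in tp a by rewrite tpE lPY nPY tle_par.
  have PYb : par a.2 \in tp b.
    by rewrite tpE -hm lPY nPY (tle_trans (tle_par _ _) f1).
  have YPY : a.2 != par a.2.
    apply/eqP => h; move/eqP: Yr; apply; exact: (fix_root Hroot (esym h)).
  have PYc : (par a.2 \in tp c3) = false.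
    apply/negbTE; rewrite tpE (eqP hYX); apply/negP => /and3P[h _ _].
    by move/eqP: YPY; apply; exact: (tle_anti Hr Hroot h (tle_par _ _)).
  have PYr := tp_nr PYa.
  have PYZ : par a.2 != b.2.
    apply/eqP => h; have h' : tle b.2 a.2 by rewrite -h tle_par.
    by rewrite (tle_anti Hr Hroot f1 h') eqxx in f4.
  have [x1 [x2 [ga [qa [qb [qc [[h1 h2 h3] [h4 h5 h6] eA eC eB]]]]]]] :=
    ADJreal (c a - csum ang a + (ang [set a.2; par a.2] + ang [set par a.2; par (par a.2)] + ang [set a.1; a.2]))
           (c b - csum ang b + (ang [set a.2; par a.2] + ang [set par a.2; par (par a.2)] + ang [set b.2; par b.2] + ang [set b.1; b.2]))
           (c c3 - csum ang c3 + (ang [set b.2; par b.2] + ang [set c3.1; c3.2])).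
  exists (bumpa ang [:: ([set a.2; par a.2], x1); ([set par a.2; par (par a.2)], x2);
     ([set b.2; par b.2], ga); ([set a.1; a.2], qa); ([set b.1; b.2], qb);
     ([set c3.1; c3.2], qc)]).
  have EXa := m1 _ ab _ Ya. have EYa := m1 _ ab _ PYa. have EZa := m0 _ ab _ Zr (negbT Za).
  have EXb := m1 _ bb _ Yb. have EYb := m1 _ bb _ PYb. have EZb := m1 _ bb _ Zb.
  have EXc := m0 _ cb _ Yr (negbT Yc). have EYc := m0 _ cb _ PYr (negbT PYc).
  have EZc := m1 _ cb _ Zc.
  apply: realize_bump => //.
  + by rewrite /= EXa EYa EZb !cyc_bedge // !eqxx /= ?orbT.
  + have := @edges_uniq [:: a.2; par a.2; b.2] [:: a; b; c3]; rewrite /=; apply.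
    * by rewrite !inE negb_or YPY f4 PYZ.
    * by rewrite Yr PYr Zr.
    * by rewrite !inE negb_or nab nac nbc.
    * by rewrite ab bb cb.
  + move=> p; rewrite !inE => /or3P[/eqP->|/eqP->|/eqP->]; apply: sat_bump;
      rewrite !big_cons !big_nil /=.
    * rewrite EXa EYa EZa !cyc_bedge // eqxx bab bca /=.
      transitivity (cexpi (x1 + x2 + qa)); first by congr cexpi; ring.
      by rewrite eA; congr cexpi; ring.
    * rewrite EXb EYb EZb !cyc_bedge // eqxx bba bcb /=.
      transitivity (cexpi (x1 + x2 + ga + qb)); first by congr cexpi; ring.
      by rewrite eB; congr cexpi; ring.
    * rewrite EXc EYc EZc !cyc_bedge // eqxx bac bbc /=.
      transitivity (cexpi (ga + qc)); first by congr cexpi; ring.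
      by rewrite eC; congr cexpi; ring.
-
  have Xc : (c3.1 \in tp c3) = false by rewrite tpE eqxx /= andbF.
  have Yc : a.2 \in tp c3 by rewrite tpE f6 eq_sym hYX -hM f1.
  have Xr := tp_nr Xa.
  have XZ : c3.1 != b.2 by rewrite hM.
  have [al [be [ga [p1 [p2 [p3 [[h1 h2 h3] [h4 h5 h6] eA eC eB]]]]]]] :=
    K4real (c a - csum ang a + (ang [set c3.1; par c3.1] + ang [set a.2; par a.2] + ang [set a.1; a.2]))
           (c b - csum ang b + (ang [set c3.1; par c3.1] + ang [set a.2; par a.2] + ang [set b.2; par b.2] + ang [set b.1; b.2]))
           (c c3 - csum ang c3 + (ang [set a.2; par a.2] + ang [set b.2; par b.2] + ang [set c3.1; c3.2])).
  exists (bumpa ang [:: ([set c3.1; par c3.1], al); ([set a.2; par a.2], be);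
     ([set b.2; par b.2], ga); ([set a.1; a.2], p1); ([set b.1; b.2], p3);
     ([set c3.1; c3.2], p2)]).
  have EXa := m1 _ ab _ Xa. have EYa := m1 _ ab _ Ya. have EZa := m0 _ ab _ Zr (negbT Za).
  have EXb := m1 _ bb _ f5. have EYb := m1 _ bb _ Yb. have EZb := m1 _ bb _ Zb.
  have EXc := m0 _ cb _ Xr (negbT Xc). have EYc := m1 _ cb _ Yc. have EZc := m1 _ cb _ Zc.
  apply: realize_bump => //.
  + by rewrite /= EXa EYa EZb !cyc_bedge // !eqxx /= ?orbT.
  + have := @edges_uniq [:: c3.1; a.2; b.2] [:: a; b; c3]; rewrite /=; apply.
    * by rewrite !inE negb_or hYX XZ f4.
    * by rewrite Xr Yr Zr.
    * by rewrite !inE negb_or nab nac nbc.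
    * by rewrite ab bb cb.
  + move=> p; rewrite !inE => /or3P[/eqP->|/eqP->|/eqP->]; apply: sat_bump;
      rewrite !big_cons !big_nil /=.
    * rewrite EXa EYa EZa !cyc_bedge // eqxx bab bca /=.
      transitivity (cexpi (al + be + p1)); first by congr cexpi; ring.
      by rewrite eA; congr cexpi; ring.
    * rewrite EXb EYb EZb !cyc_bedge // eqxx bba bcb /=.
      transitivity (cexpi (al + be + ga + p3)); first by congr cexpi; ring.
      by rewrite eB; congr cexpi; ring.
    * rewrite EXc EYc EZc !cyc_bedge // eqxx bac bbc /=.
      transitivity (cexpi (be + ga + p2)); first by congr cexpi; ring.
      by rewrite eC; congr cexpi; ring.
Qed.

Lemma pig3 (X : eqType) (le : rel X) :
  (forall x y, le x y -> le y x -> x = y) -> (forall x y z, le x y -> le y z -> le x z) ->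
  forall x1 x2 x3, le x1 x2 || le x1 x3 -> le x2 x1 || le x2 x3 -> le x3 x1 || le x3 x2 ->
  [\/ x1 = x2, x1 = x3 | x2 = x3].
Proof.
move=> A Tr x1 x2 x3 /orP[h1|h1] /orP[h2|h2] /orP[h3|h3].
- by constructor 1; apply: A.
- by constructor 1; apply: A.
- by constructor 2; apply: A (Tr _ _ _ h1 h2) h3.
- by constructor 3; apply: A.
- by constructor 2; apply: A.
- by constructor 2; apply: A h1 (Tr _ _ _ h3 h2).
- by constructor 2; apply: A.
- by constructor 3; apply: A.
Qed.

Lemma triple_real ang a b c3 : a \in back -> b \in back -> c3 \in back ->
  uniq [:: a; b; c3] -> good ang -> exists ang', realizes ang [:: a; b; c3] ang'.
Proof.
move=> ab bb cb /= u g; move: u; rewrite !inE negb_or andbT => /andP[/andP[nab nac] nbc].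
case: (boolP (1 < #|cyc c3 :\: (cyc a :|: cyc b)|)%N) => hc.
  exact: triple_easy.
case: (boolP (1 < #|cyc a :\: (cyc b :|: cyc c3)|)%N) => ha.
  have [ang' h] := triple_easy bb cb ab nbc ha g; exists ang'.
  by apply: realizes_perm h => x; rewrite !inE; case: (x == a); case: (x == b); case: (x == c3).
case: (boolP (1 < #|cyc b :\: (cyc a :|: cyc c3)|)%N) => hb.
  have [ang' h] := triple_easy ab cb bb nac hb g; exists ang'.
  by apply: realizes_perm h => x; rewrite !inE; case: (x == a); case: (x == b); case: (x == c3).
rewrite -leqNgt in ha; rewrite -leqNgt in hb; rewrite -leqNgt in hc.
have ba : b != a by rewrite eq_sym. have ca : c3 != a by rewrite eq_sym.
have cbb : c3 != b by rewrite eq_sym.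
have Ia : forall u, u \in tp a -> (u \in tp b) || (u \in tp c3).
  by move=> u ui; apply: (sub_tp2 ab bb cb nab nac ha ui).
have Ib : forall u, u \in tp b -> (u \in tp a) || (u \in tp c3).
  by move=> u ui; apply: (sub_tp2 bb ab cb ba nbc hb ui).
have Ic : forall u, u \in tp c3 -> (u \in tp a) || (u \in tp b).
  by move=> u ui; apply: (sub_tp2 cb ab bb ca cbb hc ui).
have Ia' : forall u, u \in tp a -> (u \in tp c3) || (u \in tp b) by move=> u /Ia; rewrite orbC.
have Ib' : forall u, u \in tp b -> (u \in tp c3) || (u \in tp a) by move=> u /Ib; rewrite orbC.
have Ic' : forall u, u \in tp c3 -> (u \in tp b) || (u \in tp a) by move=> u /Ic; rewrite orbC.
have tl : forall p q q', p \in back -> (forall u, u \in tp p -> (u \in tp q) || (u \in tp q')) ->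
    tle p.2 q.2 || tle p.2 q'.2.
  move=> p q q' pb I; case/orP: (I _ (t_in_tp pb)); rewrite tpE => /and3P[_ _ h].
    by rewrite h.
  by rewrite h orbT.
have sl : forall p q q', p \in back -> (forall u, u \in tp p -> (u \in tp q) || (u \in tp q')) ->
    tle q.1 p.1 || tle q'.1 p.1.
  move=> p q q' pb I; have [u ui pu] := child_exists pb.
  case/orP: (I _ ui) => h; first by rewrite (tle_child h pu).
  by rewrite (tle_child h pu) orbT.
have Aa : forall x y : T, tle x y -> tle y x -> x = y by move=> x y; apply: (tle_anti Hr Hroot).
have Tt : forall x y z : T, tle x y -> tle y z -> tle x z by move=> x y z; apply: tle_trans.
have Ht := pig3 Aa Tt (tl _ _ _ ab Ia) (tl _ _ _ bb Ib) (tl _ _ _ cb Ic).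
have Hs := @pig3 _ (fun x y => tle y x) (fun x y h1 h2 => Aa _ _ h2 h1)
   (fun x y z h1 h2 => Tt _ _ _ h2 h1) _ _ _ (sl _ _ _ ab Ia) (sl _ _ _ bb Ib) (sl _ _ _ cb Ic).
have neq : forall p q : T * T, p != q -> p.1 = q.1 -> p.2 = q.2 -> False.
  by move=> p q /eqP npq h1 h2; apply: npq; apply: pair_ext.
have perm3 : forall x y z ang', realizes ang [:: x; y; z] ang' ->
   [:: x; y; z] =i [:: a; b; c3] -> exists ang', realizes ang [:: a; b; c3] ang'.
  by move=> x y z ang' h hp; exists ang'; apply: realizes_perm h.
case: Ht => Et; case: Hs => Es.
- by case: (neq _ _ nab Es Et).
-
  have [ang' h] := canon cb ab bb ca nab cbb (esym Es) Et Ic Ia' Ib' g.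
  by apply: perm3 h _ => x; rewrite !inE; case: (x == a); case: (x == b); case: (x == c3).
-
  have [ang' h] := canon cb bb ab cbb ba ca (esym Es) (esym Et) Ic' Ib' Ia' g.
  by apply: perm3 h _ => x; rewrite !inE; case: (x == a); case: (x == b); case: (x == c3).
-
  have [ang' h] := canon bb ab cb ba nac nbc (esym Es) Et Ib Ia Ic' g.
  by apply: perm3 h _ => x; rewrite !inE; case: (x == a); case: (x == b); case: (x == c3).
- by case: (neq _ _ nac Es Et).
-
  have [ang' h] := canon bb cb ab nbc ca ba Es (esym Et) Ib' Ic' Ia g.
  by apply: perm3 h _ => x; rewrite !inE; case: (x == a); case: (x == b); case: (x == c3).
-
  exact: canon ab bb cb nab nbc nac Es Et Ia Ib Ic g.
-
  have [ang' h] := canon ab cb bb nac cbb nab Es (esym Et) Ia' Ic Ib g.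
  by apply: perm3 h _ => x; rewrite !inE; case: (x == a); case: (x == b); case: (x == c3).
- by case: (neq _ _ nbc Es Et).
Qed.

Local Notation sumE := (sum_edges par).
Local Notation TE S := (sum_edges par S :&: tree_edges r par).

Lemma sumE_mem F (S : {set T * T}) : (F \in sumE S) = [exists p in S, F \in cyc p].
Proof.
apply/bigcupP/existsP => [[p pS Fp]|[p /andP[pS Fp]]]; last by exists p.
by exists p; rewrite pS.
Qed.

Lemma common_vertex p q F : p \in back -> q \in back -> F \in cyc p -> F \in cyc q ->
  exists u, (u \in tp p) && (u \in tp q).
Proof.
move=> pb qb Fp Fq; case: (cyc_cases Fp) => [[u ui FE]|FE].
  exists u; rewrite ui /=; move: Fq; rewrite FE cyc_tedge //; exact: tp_nr ui.
move: Fq; rewrite FE cyc_bedge // => /eqP qp.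
by exists p.2; rewrite -qp t_in_tp.
Qed.

Lemma TE_mem (S : {set T * T}) p u : p \in S -> p \in back -> u \in tp p ->
  [set u; par u] \in TE S.
Proof.
move=> pS pb ui; rewrite in_setI; apply/andP; split.
  by rewrite sumE_mem; apply/existsP; exists p; rewrite pS cyc_tedge // (tp_nr ui).
by apply/imsetP; exists u => //; rewrite inE (tp_nr ui).
Qed.

Lemma edge_rel_sym (F : {set {set T}}) : symmetric (edge_rel F).
Proof. by move=> x y; rewrite /edge_rel setUC. Qed.

Lemma connect_mono (F1 F2 : {set {set T}}) x y : F1 \subset F2 ->
  connect (edge_rel F1) x y -> connect (edge_rel F2) x y.
Proof.
move=> /subsetP sF; apply: connect_sub => a b hab.
by apply: connect1; apply: sF.
Qed.

Lemma edge_connectedU (F1 F2 : {set {set T}}) v : edge_connected F1 -> edge_connected F2 ->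
  v \in vertices F1 -> v \in vertices F2 -> edge_connected (F1 :|: F2).
Proof.
move=> c1 c2 v1 v2 x y.
have s1 : F1 \subset F1 :|: F2 by apply: subsetUl.
have s2 : F2 \subset F1 :|: F2 by apply: subsetUr.
have sy := sym_connect_sym (edge_rel_sym (F1 :|: F2)).
rewrite /vertices !bigcup_setU !in_setU => hx hy.
have hx' : connect (edge_rel (F1 :|: F2)) x v.
  case/orP: hx => hx.
    by apply: (connect_mono s1); apply: c1.
  by apply: (connect_mono s2); apply: c2.
have hy' : connect (edge_rel (F1 :|: F2)) v y.
  case/orP: hy => hy.
    by apply: (connect_mono s1); apply: c1.
  by apply: (connect_mono s2); apply: c2.
exact: connect_trans hx' hy'.
Qed.

Lemma fund_disj (S1 S2 : {set T * T}) p F : fundamental_set e r par S1 ->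
  fundamental_set e r par S2 -> p \in S1 -> F \in cyc p -> F \in sumE S2 -> S1 = S2.
Proof.
move=> [sb1 m1 M1] [sb2 m2 M2] pS Fp; rewrite sumE_mem => /existsP[q /andP[qS Fq]].
have pb : p \in back by apply: (subsetP sb1).
have qb : q \in back by apply: (subsetP sb2).
have [u /andP[up uq]] := common_vertex pb qb Fp Fq.
have mU : meets_in_subtree r par (S1 :|: S2).
  rewrite /meets_in_subtree /sum_edges bigcup_setU setIUl.
  apply: (@edge_connectedU _ _ u) => //.
  - apply/bigcupP; exists [set u; par u]; first exact: TE_mem pS pb up.
    by rewrite !inE eqxx.
  - apply/bigcupP; exists [set u; par u]; first exact: TE_mem qS qb uq.
    by rewrite !inE eqxx.
have sU : S1 :|: S2 \subset back by rewrite subUset sb1 sb2.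
have e1 := M1 _ (subsetUl S1 S2) sU mU.
have e2 := M2 _ (subsetUr S1 S2) sU mU.
by rewrite -e1 e2.
Qed.

Lemma meets1 p : p \in back -> meets_in_subtree r par [set p].
Proof.
move=> pb; set F := TE [set p].
have pS : p \in [set p] by rewrite inE.
have Fm : forall u, u \in tp p -> [set u; par u] \in F by move=> u; apply: TE_mem.
have [_ lp _ np] := back_props pb.
have key : forall k u, u \in tp p -> tle u (iter k par p.2) -> connect (edge_rel F) (iter k par p.2) p.2.
  elim=> [|k IH] u ui hk; first exact: connect0.
  set w := iter k par p.2 in IH *.
  have hw : tle u w := tle_up hk.
  move: (ui); rewrite tpE => /and3P[h1 h2 h3].
  have wi : w \in tp p.
    have hw2 : tle w p.2 by apply: fconnect_iter.
    rewrite tpE (tle_trans h1 hw) hw2 andbT.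
    apply/negP => /eqP wp; move/negP: h2; apply; apply/eqP.
    apply: (tle_anti Hr Hroot) => //.
    by apply: (tle_trans hk); rewrite /= -/w wp tle_par.
  apply: connect_trans (IH _ ui hw).
  by apply: connect1; rewrite /edge_rel /= -/w setUC; apply: Fm.
have cu : forall u, u \in tp p -> connect (edge_rel F) u p.2.
  move=> u ui; move: (ui); rewrite tpE => /and3P[_ _ /(tleP _)[n hn]].
  by have := key n u ui; rewrite hn; apply; apply: tle_refl.
have cv : forall x, x \in vertices F -> connect (edge_rel F) x p.2.
  move=> x /bigcupP[E EF xE].
  move: EF; rewrite in_setI => /andP[EF ET].
  move: EF; rewrite /sum_edges big_set1 => /cyc_cases [[u ui EE]|EE].
    move: xE; rewrite EE !inE => /orP[/eqP->|/eqP->]; first exact: cu.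
    apply: connect_trans (cu _ ui); apply: connect1.
    by rewrite /edge_rel setUC; apply: Fm.
  exfalso; move: ET; rewrite EE => /imsetP[w]; rewrite inE => wr /eqP.
  by rewrite (negbTE (back_not_tedge pb wr)).
have sy := sym_connect_sym (edge_rel_sym F).
move=> x y hx hy; apply: connect_trans (cv _ hx) _.
by rewrite sy; apply: cv.
Qed.

Lemma exists_fund p : p \in back -> exists S, fundamental_set e r par S /\ p \in S.
Proof.
move=> pb.
suff H : forall k (S : {set T * T}), (#|~: S| <= k)%N -> p \in S -> S \subset back ->
    meets_in_subtree r par S -> exists S', fundamental_set e r par S' /\ p \in S'.
  apply: (H _ [set p] (leqnn _)); rewrite ?inE ?sub1set //; exact: meets1.
elim=> [|k IH] S hk pS Sb mS.
  all: case: (classic (forall S' : {set T * T}, S \subset S' -> S' \subset back ->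
             meets_in_subtree r par S' -> S' = S)) => hmax.
  - by exists S; split.
  - exfalso; apply: hmax => S' sS _ _; apply/eqP; rewrite eqEsubset sS andbT.
    apply/subsetP => x _; move: hk; rewrite leqn0 cards_eq0 => /eqP h0.
    apply/negPn/negP => xS.
    have : x \in ~: S by rewrite inE.
    by rewrite h0 inE.
  - by exists S; split.
  - have [S' hS'] := not_all_ex_not _ _ hmax.
    have [sS hS''] := imply_to_and _ _ hS'.
    have [Sb' hS3] := imply_to_and _ _ hS''.
    have [mS' nS] := imply_to_and _ _ hS3.
    apply: (IH S') => //; last by apply: (subsetP sS).
    have pr : S \proper S' by rewrite properEneq sS andbT; apply/eqP => h; apply: nS; rewrite h.
    have : ~: S' \proper ~: S by rewrite properC.
    move/proper_card => h; rewrite -ltnS; exact: leq_trans h hk.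
Qed.

Lemma perm_enum_mem (ks : seq (T * T)) (A : {set T * T}) x :
  perm_eq ks (enum A) -> (x \in ks) = (x \in A).
Proof. by move/perm_mem => ->; rewrite mem_enum. Qed.

Lemma realize_set ang (S : {set T * T}) : fundamental_set e r par S ->
  ((K4_initiated par S -> DEP_K4 par S) /\ (~ K4_initiated par S -> DEP_nonK4 par S)) ->
  good ang -> exists ang', [/\ good ang', (forall F, F \notin sumE S -> ang' F = ang F) &
     forall p, p \in S -> sat ang' p].
Proof.
move=> [Sb _ _] [hK hN] g.
have nots : forall F, F \notin sumE S -> forall p, p \in S -> F \notin cyc p.
  move=> F; rewrite sumE_mem => /existsP nF p pS; apply/negP => Fp; apply: nF.
  by exists p; rewrite pS.
have inb : forall p, p \in S -> p \in back by move=> p; apply: (subsetP Sb).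
case: (classic (K4_initiated par S)) => hk.
- have [p1 [p2 [p3 [ks [u sub _ pe dep]]]]] := hK hk.
  have i1 : p1 \in S by apply: (subsetP sub); rewrite !inE eqxx.
  have i2 : p2 \in S by apply: (subsetP sub); rewrite !inE eqxx orbT.
  have i3 : p3 \in S by apply: (subsetP sub); rewrite !inE eqxx !orbT.
  have [ang1 [g1 c1 s1]] := triple_real (inb _ i1) (inb _ i2) (inb _ i3) u g.
  have [ang2 [g2 c2 s2]] := seq_real dep g1.
  have ksS : forall k, k \in ks -> k \in S.
    by move=> k; rewrite (perm_enum_mem _ pe) in_setD => /andP[].
  exists ang2; split => //.
  + move=> F nF; rewrite c2; last first.
      apply/orP; right; apply/hasPn => k kk; exact: (nots _ nF _ (ksS _ kk)).
    apply: c1; rewrite /= !negb_or ?orbF !(nots _ nF) //.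
  + move=> p pS.
    case: (boolP (p \in [set p1; p2; p3])) => hp.
      apply: (sat_stable (ang:=ang1)).
        move=> F Fp; apply: c2.
        have : [|| p == p1, p == p2 | p == p3] by move: hp; rewrite !inE -orbA.
        case/or3P => /eqP hp'; apply/orP; left; rewrite -hp'; apply/setUP.
        - by left; apply/setUP; left.
        - by left; apply/setUP; right.
        - by right.
      by apply: s1; move: hp; rewrite !inE -orbA.
    by apply: s2; rewrite (perm_enum_mem _ pe) in_setD hp.
- have [ks [pe hks]] := hN hk.
  case: ks pe hks => [|k ks] pe hks.
    exists ang; split => // p; by rewrite -(perm_enum_mem _ pe).
  have kS : k \in S by rewrite -(perm_enum_mem _ pe) inE eqxx.
  have hk1 : (1 < #|cyc k :\: set0|)%N by rewrite setD0 card_cyc // inb.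
  have [ang1 [g1 c1 s1]] := step hk1 g.
  have [ang2 [g2 c2 s2]] := seq_real hks g1.
  have ksS : forall k', k' \in ks -> k' \in S.
    by move=> k' kk; rewrite -(perm_enum_mem _ pe) inE kk orbT.
  exists ang2; split => //.
  + move=> F nF; rewrite c2; last first.
      apply/orP; right; apply/hasPn => k' kk; exact: (nots _ nF _ (ksS _ kk)).
    by apply: c1; rewrite (nots _ nF) // orbT.
  + move=> p; rewrite -(perm_enum_mem _ pe) inE => /orP[/eqP->|pk]; last exact: s2.
    by apply: (sat_stable (ang:=ang1)) => // F Fk; apply: c2; rewrite Fk.
Qed.

Lemma realize_all : EDEP e r par ->
  exists ang, good ang /\ forall p, p \in back -> sat ang p.
Proof.
move=> H.
suff [ang [g hs]] : exists ang, good ang /\ forall S : {set T * T}, S \in enum {: {set T * T}} ->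
    fundamental_set e r par S -> forall p, p \in S -> sat ang p.
  exists ang; split => // p pb.
  have [S [fS pS]] := exists_fund pb.
  by apply: (hs S) => //; rewrite mem_enum.
elim: (enum _) => [|S L [ang [g hs]]].
  exists (fun _ => 0); split => // F; rewrite /IH; have := pi_gt0 R; lra.
case: (classic (fundamental_set e r par S)) => fS.
  have [ang' [g' c' s']] := realize_set fS (H S fS) g.
  exists ang'; split => // S'; rewrite in_cons; case: (S' =P S) => [->|nS] /= hS' fS' p pS'.
    exact: s'.
  apply: (sat_stable (ang:=ang)); last exact: (hs S' hS' fS' p pS').
  move=> F Fp; apply: c'; apply/negP => FS.
  by apply: nS; apply: (fund_disj fS' fS pS' Fp FS).
exists ang; split => // S'; rewrite in_cons; case: (S' =P S) => [->|nS] /= hS' fS'.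
  by exfalso.
exact: hs.
Qed.

Local Open Scope complex_scope.

Hypothesis Hn : normal_tree e par.

Definition fwd x y := if tree_edge r par x y then (y != r) && (par y == x) else tle y x.

Lemma fwd_sym x y : e x y -> fwd y x = ~~ fwd x y.
Proof.
move=> exy; rewrite /fwd tree_edge_sym.
case: ifP => ht.
  move: ht; rewrite /tree_edge => /orP[/andP[xr /eqP px]|/andP[yr /eqP py]].
    rewrite xr px eqxx /=; apply/esym/negP => /andP[yr /eqP py].
    by apply: (no_2cycle Hr Hroot xr px py).
  rewrite yr py eqxx /=; apply/negbTE/negP => /andP[xr /eqP px].
  by apply: (no_2cycle Hr Hroot xr px py).
case/orP: (Hn exy) => h.
  rewrite h; apply/esym/negP => h'.
  have exy' := tle_anti Hr Hroot h h'.
  by move: exy; rewrite exy' Hirr.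
rewrite h; apply/negbTE/negP => h'.
have exy' := tle_anti Hr Hroot h' h.
by move: exy; rewrite exy' Hirr.
Qed.

Lemma gnrp_from ang : good ang -> (forall p, p \in back -> sat ang p) ->
  exists phi : T -> T -> R[i],
    in_AT e r par c phi /\ forall x y, 0 <= 'Re (gain_adj e phi x y).
Proof.
move=> g hs.
pose phi x y := if fwd x y then cexpi (ang [set x; y]) else cexpi (- ang [set x; y]).
exists phi; split; first split.
- move=> x y exy; split.
    by rewrite /phi; case: ifP => _; rewrite norm_cexpi.
  rewrite /phi fwd_sym // setUC; case: (fwd x y) => /=.
    by rewrite cexpiN.
  by rewrite cexpiN invrK.
- move=> p pb; rewrite /cycle_gain.
  have [_ lp ntp np] := back_props pb.
  have -> : phi p.2 p.1 = cexpi (ang [set p.1; p.2]).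
    by rewrite /phi /fwd tree_edge_sym (negbTE ntp) lp setUC.
  have -> : \prod_(u in tp p) phi (par u) u = \prod_(u in tp p) cexpi (ang [set u; par u]).
    apply: eq_bigr => u ui.
    by rewrite /phi /fwd tree_edge_sym (tedge_tree (tp_nr ui)) (tp_nr ui) eqxx /= setUC.
  rewrite -(big_morph _ (@cexpiD R) (cexpi0 R)) -cexpiD -(hs _ pb) /csum cycE (setUC [set [set u; par u] | u in _]).
  rewrite big_setU1 /=; last first.
    by apply/imsetP => -[u ui /eqP]; rewrite (negbTE (back_not_tedge pb (tp_nr ui))).
  rewrite big_imset //= => u v ui vi; apply: tedge_inj; [exact: (tp_nr ui) | exact: (tp_nr vi)].
- move=> x y; rewrite /gain_adj; case: ifP => _.
    rewrite /phi; case: ifP => _; apply: Re_cexpi_ge0; last apply: IHN; exact: g.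
  by rewrite -complexRe ler0c.
Qed.

End GA.

End PM.
Import PM.

Theorem theorem4p4 (R : realType) (T : finType) (e : rel T) (r : T) (par : T -> T) :
  simple_graph e -> connected_graph e ->
  rooted_spanning_tree e r par -> normal_tree e par ->
  EDEP e r par -> GNRP R e r par.
Proof.
move=> [Hsym Hirr] _ [Hr Hpe Hroot] Hn H c _.
have [ang [g hs]] := realize_all Hirr Hr Hroot c H.
exact: (gnrp_from Hirr Hr Hroot Hn g hs).
Qed.
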